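(* In the multidimensional knapsack problem, let $x^*$ be a basic optimal solution of the LP relaxation with value $V^*=\sum_iv_ix_i^*$, and let $q_{\max}:=\max_{i,j}w_{ij}/B_j$, assumed positive. If $k$ is an item with $0<x_k^*<1$, then $v_k\le q_{\max}V^*$.
   Context: Multidimensional knapsack: a finite set of items $i$, each with value $v_i\ge0$ and weight vector $(w_{i1},\dots,w_{im})\in\mathbb{R}_+^m$, and capacities $B_1,\dots,B_m>0$. The LP relaxation maximizes $\sum_iv_ix_i$ subject to $0\le x_i\le1$ for all $i$ and $\sum_iw_{ij}x_i\le B_j$ for all $j$. *)

(* Defs.v *)
From mathcomp Require Import all_boot all_order all_algebra.
Set Implicit Arguments. Unset Strict Implicit. Unset Printing Implicit Defensive.
Import Order.TTheory GRing.Theory Num.Theory.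
Local Open Scope ring_scope.

Section MKP.
Variables (R : realFieldType) (n m : nat).
Variables (w : 'I_n -> 'I_m -> R) (B : 'I_m -> R).

Definition lp_feasible (x : 'I_n -> R) : Prop :=
  (forall i, 0 <= x i <= 1) /\
  (forall j, \sum_(i < n) w i j * x i <= B j).

Definition lp_value (v : 'I_n -> R) (x : 'I_n -> R) : R :=
  \sum_(i < n) v i * x i.

Definition lp_optimal (v : 'I_n -> R) (x : 'I_n -> R) : Prop :=
  lp_feasible x /\ forall y, lp_feasible y -> lp_value v y <= lp_value v x.

(* Basic solution: the constraints active at x (bounds x_i = 0 or x_i = 1,
   and tight capacities) have full column rank n, i.e. the only direction d
   annihilated by all active constraint rows is d = 0. *)
Definition lp_basic (x : 'I_n -> R) : Prop :=
  lp_feasible x /\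
  forall d : 'I_n -> R,
    (forall i, (x i == 0) || (x i == 1) -> d i = 0) ->
    (forall j, \sum_(i < n) w i j * x i = B j -> \sum_(i < n) w i j * d i = 0) ->
    forall i, d i = 0.

(* q_max := max_{i,j} w_ij / B_j (all ratios are >= 0, so 0 is a neutral
   start; q_max > 0 forces the range to be nonempty). *)
Definition qmax : R := \big[Num.max/0]_(i < n) \big[Num.max/0]_(j < m) (w i j / B j).

End MKP.

(* Main.v *)
Require Import Defs.
From mathcomp Require Import all_boot all_order all_algebra.
From mathcomp Require Import lra.
Import Order.TTheory GRing.Theory Num.Theory.
Local Open Scope ring_scope.

Lemma le_bigmax0_seq (R : realFieldType) (I : eqType) (s : seq I) (F : I -> R) x :
  x \in s -> F x <= \big[Num.max/0]_(i <- s) F i.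
Proof.
elim: s => [//|a s IH]; rewrite inE big_cons => /orP[/eqP->|/IH h].
  by rewrite le_max lexx.
by rewrite le_max h orbT.
Qed.

Lemma le_bigmax0 (R : realFieldType) n (F : 'I_n -> R) i :
  F i <= \big[Num.max/0]_(i < n) F i.
Proof. by apply: le_bigmax0_seq; rewrite mem_index_enum. Qed.

Lemma sum_aff (R : realFieldType) n (f g : 'I_n -> R) (c a : R) (k : 'I_n) :
  \sum_(i < n) f i * (a * g i + (if i == k then c else 0))
  = a * \sum_(i < n) f i * g i + f k * c.
Proof.
rewrite mulr_sumr.
under eq_bigr => i _ do rewrite mulrDr mulrCA.
rewrite big_split /=; congr (_ + _).
rewrite (bigD1 k) //= eqxx big1 ?addr0 // => i /negbTE ->; exact: mulr0.
Qed.

Theorem lemma5 (R : realFieldType) (n m : nat)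
    (v : 'I_n -> R) (w : 'I_n -> 'I_m -> R) (B : 'I_m -> R)
    (hv : forall i, 0 <= v i) (hw : forall i j, 0 <= w i j)
    (hB : forall j, 0 < B j)
    (x : 'I_n -> R)
    (hopt : lp_optimal w B v x) (hbasic : lp_basic w B x)
    (hq : 0 < qmax w B)
    (k : 'I_n) (hk : 0 < x k < 1) :
  v k <= qmax w B * lp_value v x.
Proof.
case: hopt => [[hx0 hxw] hmax].
set q := qmax w B.
have hkq : forall j, w k j <= q * B j.
  move=> j; rewrite -ler_pdivrMr //.
  have h := le_bigmax0 _ _ (fun i => \big[Num.max/0]_(j < m) (w i j / B j)) k.
  rewrite /q /qmax; apply: le_trans h.
  exact: (le_bigmax0 _ _ (fun j => w k j / B j)).
case/andP: hk => hk0 hk1.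
set s := (1 - x k) / (q^-1 + 1).
have hqi : 0 < q^-1 by rewrite invr_gt0.
have hd : 0 < q^-1 + 1 by lra.
have hs0 : 0 < s by apply: divr_gt0 => //; lra.
have hs1 : s * (q^-1 + 1) = 1 - x k by rewrite /s mulfVK // gt_eqF.
have hs1' : s <= 1.
  have : s * 1 <= s * (q^-1 + 1) by rewrite ler_pM2l //; lra.
  rewrite mulr1 hs1 => h; lra.
set y := fun i => (1 - s) * x i + (if i == k then s / q else 0).
have hy : lp_feasible w B y.
  split.
    move=> i; rewrite /y; case: eqP => [->|_].
      apply/andP; split; first by apply: addr_ge0; [apply: mulr_ge0; lra | exact: divr_ge0 (ltW hs0) (ltW hq)].
      have h1 : s * q^-1 + s = 1 - x k by rewrite -hs1 mulrDr mulr1.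
      have h2 : 0 <= s * x k by apply: mulr_ge0; lra.
      rewrite mulrBl mul1r; lra.
    rewrite addr0; move: (hx0 i) => /andP[a b]; apply/andP; split.
      by apply: mulr_ge0; lra.
    have h3 : (1 - s) * x i <= (1 - s) * 1 by apply: ler_wpM2l; lra.
    lra.
  move=> j.
  have -> : \sum_(i < n) w i j * y i = (1 - s) * \sum_(i < n) w i j * x i + w k j * (s / q).
    exact: sum_aff.
  have h1 : (1 - s) * \sum_(i < n) w i j * x i <= (1 - s) * B j by rewrite ler_wpM2l // subr_ge0.
  have h2 : w k j * (s / q) <= s * B j.
    rewrite mulrCA ler_pM2l // ler_pdivrMr // mulrC; exact: hkq.
  have -> : B j = (1 - s) * B j + s * B j by rewrite mulrBl mul1r subrK.
  exact: lerD h1 h2.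
have hv' := hmax y hy.
have e : lp_value v y = (1 - s) * lp_value v x + v k * (s / q).
  exact: sum_aff.
rewrite e mulrBl mul1r in hv'.
have : v k * (s / q) <= s * lp_value v x by lra.
by rewrite mulrCA ler_pM2l // ler_pdivrMr // mulrC.
Qed.
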